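(* (Completeness of IML1.) Let $\Gamma$ be an IML1-theory and $\varphi$ a formula with $\varphi\notin\Gamma$. Then there exist an nIML1-model $\langle W,\mathcal{N},V\rangle$ and a world $v\in W$ such that $v\Vdash\psi$ for every $\psi\in\Gamma$ and $v\nVdash\varphi$.
   Context: Formulas are built from a denumerable set $PV$ of propositional variables and $\bot$ using $\land,\lor,\rightarrow$ and unary $\Delta$; $\lnot\varphi$ abbreviates $\varphi\rightarrow\bot$. The axioms of IML1 are all instances of the axiom schemes of intuitionistic propositional calculus (in this language), of K: $\Delta(\varphi\rightarrow\psi)\rightarrow(\Delta\varphi\rightarrow\Delta\psi)$ and of T: $\Delta\varphi\rightarrow\varphi$. An IML1-theory is a set of formulas containing all axioms and closed under modus ponens and under RN (if $\varphi$ is in the set then so is $\Delta\varphi$). An nIML1-frame is a pair $\langle W,\mathcal{N}\rangle$, $W\neq\emptyset$, $\mathcal{N}:W\to P(P(W))$, such that for all $w$: (a) $w\in\bigcap\mathcal{N}_w$; (b) $\bigcap\mathcal{N}_w\in\mathcal{N}_w$; (c) $u\in\bigcap\mathcal{N}_w\Rightarrow\bigcap\mathcal{N}_u\subseteq\bigcap\mathcal{N}_w$; (d) $\bigcap\mathcal{N}_w\subseteq X\subseteq\bigcup\mathcal{N}_w\Rightarrow X\in\mathcal{N}_w$; (e) $u\in\bigcap\mathcal{N}_w\Rightarrow\bigcup\mathcal{N}_u\subseteq\bigcup\mathcal{N}_w$ ($\bigcap\mathcal{N}_w$, $\bigcup\mathcal{N}_w$ being the intersection and union of the family $\mathcal{N}_w$).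 An nIML1-model adds $V:PV\to P(W)$ with $w\in V(q)\Rightarrow\bigcap\mathcal{N}_w\subseteq V(q)$. Forcing: $w\Vdash q$ iff $w\in V(q)$; $w\nVdash\bot$; $\land,\lor$ pointwise; $w\Vdash\varphi\rightarrow\psi$ iff every $v\in\bigcap\mathcal{N}_w$ has $v\nVdash\varphi$ or $v\Vdash\psi$; $w\Vdash\Delta\varphi$ iff every $v\in\bigcup\mathcal{N}_w$ has $v\Vdash\varphi$. *)

(* Defs.v *)
Inductive formula : Type :=
| Var : nat -> formula
| Bot : formula
| And : formula -> formula -> formula
| Or : formula -> formula -> formula
| Imp : formula -> formula -> formula
| Delta : formula -> formula.

Definition Neg (p : formula) : formula := Imp p Bot.

Inductive ipc_axiom : formula -> Prop :=
| A1 : forall p q, ipc_axiom (Imp p (Imp q p))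
| A2 : forall p q r,
    ipc_axiom (Imp (Imp p (Imp q r)) (Imp (Imp p q) (Imp p r)))
| A3 : forall p q, ipc_axiom (Imp (And p q) p)
| A4 : forall p q, ipc_axiom (Imp (And p q) q)
| A5 : forall p q, ipc_axiom (Imp p (Imp q (And p q)))
| A6 : forall p q, ipc_axiom (Imp p (Or p q))
| A7 : forall p q, ipc_axiom (Imp q (Or p q))
| A8 : forall p q r,
    ipc_axiom (Imp (Imp p r) (Imp (Imp q r) (Imp (Or p q) r)))
| A9 : forall p, ipc_axiom (Imp Bot p).

Inductive iml1_axiom : formula -> Prop :=
| Ax_ipc : forall p, ipc_axiom p -> iml1_axiom p
| Ax_K : forall p q,
    iml1_axiom (Imp (Delta (Imp p q)) (Imp (Delta p) (Delta q)))
| Ax_T : forall p, iml1_axiom (Imp (Delta p) p).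

Definition IML1_theory (Gamma : formula -> Prop) : Prop :=
  (forall p, iml1_axiom p -> Gamma p) /\
  (forall p q, Gamma (Imp p q) -> Gamma p -> Gamma q) /\
  (forall p, Gamma p -> Gamma (Delta p)).

Section Frames.
Variable W : Type.
Variable N : W -> (W -> Prop) -> Prop.

Definition bigcapN (w : W) : W -> Prop := fun x => forall X, N w X -> X x.
Definition bigcupN (w : W) : W -> Prop := fun x => exists X, N w X /\ X x.

Definition nIML1_frame : Prop :=
  inhabited W /\
  (forall w, bigcapN w w) /\
  (forall w, N w (bigcapN w)) /\
  (forall w u, bigcapN w u -> forall x, bigcapN u x -> bigcapN w x) /\
  (forall w (X : W -> Prop),
      (forall x, bigcapN w x -> X x) ->
      (forall x, X x -> bigcupN w x) -> N w X) /\
  (forall w u, bigcapN w u -> forall x, bigcupN u x -> bigcupN w x).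

Variable V : nat -> W -> Prop.

Definition nIML1_model : Prop :=
  nIML1_frame /\
  (forall q w, V q w -> forall x, bigcapN w x -> V q x).

Fixpoint forces (w : W) (p : formula) : Prop :=
  match p with
  | Var q => V q w
  | Bot => False
  | And p1 p2 => forces w p1 /\ forces w p2
  | Or p1 p2 => forces w p1 \/ forces w p2
  | Imp p1 p2 => forall v, bigcapN w v -> ~ forces v p1 \/ forces v p2
  | Delta p1 => forall v, bigcupN w v -> forces v p1
  end.
End Frames.

(* Main.v *)
Require Import Defs.
From Stdlib Require Import List Arith Lia Classical Cantor.
Import ListNotations.

Fixpoint level (n : nat) : list formula :=
  match n with
  | 0 => [Bot; Var 0]
  | S m => let L := level m in
      Var (S m) :: L ++ flat_map (fun a => flat_map (fun b => [And a b; Or a b; Imp a b]) L) L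
                 ++ map Delta L
  end.

Lemma level_mono_S n p : In p (level n) -> In p (level (S n)).
Proof. intro H. simpl. right. apply in_or_app. left. exact H. Qed.

Lemma level_mono n m p : n <= m -> In p (level n) -> In p (level m).
Proof. induction 1; auto using level_mono_S. Qed.

Lemma level_bin n a b : In a (level n) -> In b (level n) ->
  In (And a b) (level (S n)) /\ In (Or a b) (level (S n)) /\ In (Imp a b) (level (S n)).
Proof.
  intros Ha Hb. simpl.
  assert (G : forall c, In c [And a b; Or a b; Imp a b] ->
     In c (Var (S n) :: level n ++ flat_map (fun a => flat_map (fun b => [And a b; Or a b; Imp a b]) (level n)) (level n) ++ map Delta (level n))).
  { intros c Hc. right. apply in_or_app. right. apply in_or_app. left.
    apply in_flat_map. exists a. split; auto. apply in_flat_map. exists b. split; auto. }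
  repeat split; apply G; simpl; auto.
Qed.

Lemma level_all p : exists n, In p (level n).
Proof.
  induction p.
  - destruct n. exists 0. simpl; auto. exists (S n). simpl; auto.
  - exists 0. simpl; auto.
  - destruct IHp1 as [n1 H1], IHp2 as [n2 H2]. exists (S (max n1 n2)).
    apply level_bin; [apply (level_mono n1) | apply (level_mono n2)]; auto; lia.
  - destruct IHp1 as [n1 H1], IHp2 as [n2 H2]. exists (S (max n1 n2)).
    apply level_bin; [apply (level_mono n1) | apply (level_mono n2)]; auto; lia.
  - destruct IHp1 as [n1 H1], IHp2 as [n2 H2]. exists (S (max n1 n2)).
    apply level_bin; [apply (level_mono n1) | apply (level_mono n2)]; auto; lia.
  - destruct IHp as [n H]. exists (S n). simpl. right. apply in_or_app. right.
    apply in_or_app. right. apply in_map. exact H.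
Qed.

Definition enum (k : nat) : formula :=
  let (i, n) := of_nat k in nth i (level n) Bot.

Lemma enum_surj p : exists k, enum k = p.
Proof.
  destruct (level_all p) as [n H].
  destruct (In_nth _ _ Bot H) as [i [_ Hi]].
  exists (to_nat (i, n)). unfold enum. rewrite cancel_of_to. exact Hi.
Qed.

Inductive Thm : formula -> Prop :=
| T_ax : forall p, iml1_axiom p -> Thm p
| T_mp : forall p q, Thm (Imp p q) -> Thm p -> Thm q
| T_rn : forall p, Thm p -> Thm (Delta p).

Inductive Der (S : formula -> Prop) : formula -> Prop :=
| D_thm : forall p, Thm p -> Der S p
| D_hyp : forall p, S p -> Der S p
| D_mp : forall p q, Der S (Imp p q) -> Der S p -> Der S q.

Definition ipc p (H : ipc_axiom p) {S} : Der S p := D_thm S p (T_ax p (Ax_ipc p H)).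

Lemma Der_mono (S T : formula -> Prop) p : (forall x, S x -> T x) -> Der S p -> Der T p.
Proof. intros HST H; induction H; eauto using Der. Qed.

Definition add (S : formula -> Prop) a : formula -> Prop := fun x => S x \/ x = a.

Lemma Der_id S a : Der S (Imp a a).
Proof.
  eapply D_mp. eapply D_mp. apply ipc, (A2 a (Imp a a) a).
  apply ipc, A1. apply ipc, (A1 a a).
Qed.

Lemma deduction S a p : Der (add S a) p -> Der S (Imp a p).
Proof.
  induction 1.
  - eapply D_mp. apply ipc, A1. now apply D_thm.
  - destruct H as [H|H].
    + eapply D_mp. apply ipc, A1. now apply D_hyp.
    + subst. apply Der_id.
  - eapply D_mp. eapply D_mp. apply ipc, A2. exact IHDer1. exact IHDer2.
Qed.

Lemma Der_cut S a p : Der S a -> Der (add S a) p -> Der S p.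
Proof. intros Ha Hp. eapply D_mp. apply deduction. exact Hp. exact Ha. Qed.

Record world : Type := mkW {
  wset : formula -> Prop;
  wclosed : forall p, Der wset p -> wset p;
  wcons : ~ wset Bot;
  wprime : forall p q, wset (Or p q) -> wset p \/ wset q }.

Section Lind.
Variable S0 : formula -> Prop.
Variable q : formula.

Fixpoint chain (k : nat) : formula -> Prop :=
  match k with
  | 0 => S0
  | S k' => fun x => chain k' x \/ (x = enum k' /\ ~ Der (add (chain k') (enum k')) q)
  end.

Definition lim : formula -> Prop := fun x => exists k, chain k x.

Lemma chain_mono k m x : k <= m -> chain k x -> chain m x.
Proof. induction 1; simpl; auto. Qed.

Hypothesis nd : ~ Der S0 q.

Lemma chain_nd k : ~ Der (chain k) q.
Proof.
  induction k; simpl; auto.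
  destruct (classic (Der (add (chain k) (enum k)) q)) as [H|H].
  - intro D. apply IHk. eapply Der_mono; [|exact D]. simpl. intros x [Hx|[_ Hx]]; tauto.
  - intro D. apply H. eapply Der_mono; [|exact D]. intros x [Hx|[Hx _]]; unfold add; auto.
Qed.

Lemma lim_compact p : Der lim p -> exists k, Der (chain k) p.
Proof.
  induction 1.
  - exists 0. now apply D_thm.
  - destruct H as [k Hk]. exists k. now apply D_hyp.
  - destruct IHDer1 as [k1 H1], IHDer2 as [k2 H2]. exists (max k1 k2).
    eapply D_mp; eapply Der_mono; try eassumption; intros x Hx;
      eapply chain_mono; try eassumption; lia.
Qed.

Lemma lim_nd : ~ Der lim q.
Proof. intro D. destruct (lim_compact _ D) as [k Hk]. exact (chain_nd k Hk). Qed.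

Lemma lim_in p : ~ Der (add lim p) q -> lim p.
Proof.
  intro H. destruct (enum_surj p) as [k Hk]. exists (S k). simpl. right. split; auto.
  rewrite Hk. intro D. apply H. eapply Der_mono; [|exact D].
  intros x [Hx|Hx]; [left; exists k; auto | right; auto].
Qed.

Lemma lim_closed p : Der lim p -> lim p.
Proof.
  intro D. apply lim_in. intro D2. apply lim_nd. eapply Der_cut; eauto.
Qed.

Lemma lim_cons : ~ lim Bot.
Proof.
  intro H. apply lim_nd. eapply D_mp. apply ipc, A9. now apply D_hyp.
Qed.

Lemma lim_prime a b : lim (Or a b) -> lim a \/ lim b.
Proof.
  intro H. destruct (classic (lim a)) as [Ha|Ha]; auto.
  destruct (classic (lim b)) as [Hb|Hb]; auto. exfalso.
  assert (Da : Der (add lim a) q) by (apply NNPP; intro; apply Ha, lim_in; auto).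
  assert (Db : Der (add lim b) q) by (apply NNPP; intro; apply Hb, lim_in; auto).
  apply lim_nd. eapply D_mp. eapply D_mp. eapply D_mp. apply ipc, A8.
  apply deduction, Da. apply deduction, Db. now apply D_hyp.
Qed.

Definition limW : world := mkW lim lim_closed lim_cons lim_prime.

Lemma lindenbaum : exists w : world, (forall x, S0 x -> wset w x) /\ ~ wset w q.
Proof.
  exists limW. split.
  - intros x Hx. exists 0. exact Hx.
  - intro H. apply lim_nd. now apply D_hyp.
Qed.
End Lind.

Definition Rw (w u : world) : Prop := forall x, wset w x -> wset u x.
Definition Uw (w u : world) : Prop := forall x, wset w (Delta x) -> wset u x.
Definition Nw (w : world) (X : world -> Prop) : Prop :=
  (forall x, Rw w x -> X x) /\ (forall x, X x -> Uw w x).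
Definition Vw (n : nat) (w : world) : Prop := wset w (Var n).

Lemma in_mp (w : world) p q : wset w (Imp p q) -> wset w p -> wset w q.
Proof. intros. apply wclosed. eapply D_mp; apply D_hyp; eauto. Qed.
Lemma in_thm (w : world) p : Thm p -> wset w p.
Proof. intros. apply wclosed. now apply D_thm. Qed.
Lemma in_ipc (w : world) p : ipc_axiom p -> wset w p.
Proof. intros. apply in_thm. now do 2 constructor. Qed.

Lemma R_U w u : Rw w u -> Uw w u.
Proof. intros H x Hx. apply H. eapply in_mp; [|exact Hx]. apply in_thm. constructor. apply Ax_T. Qed.

Lemma bigcap_eq w x : bigcapN world Nw w x <-> Rw w x.
Proof.
  split.
  - intro H. apply H. split; auto. apply R_U.
  - intros H X [H1 _]. auto.
Qed.

Lemma bigcup_eq w x : bigcupN world Nw w x <-> Uw w x.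
Proof.
  split.
  - intros [X [[_ H2] Hx]]. auto.
  - intro H. exists (Uw w). split; auto. split; auto. apply R_U.
Qed.

Lemma truth (p : formula) : forall w, forces world Nw Vw w p <-> wset w p.
Proof.
  induction p; intro w; simpl.
  - tauto.
  - split; [tauto|]. apply wcons.
  - rewrite IHp1, IHp2. split.
    + intros [H1 H2]. eapply in_mp. eapply in_mp. apply in_ipc, A5. eauto. eauto.
    + intro H. split; eapply in_mp; eauto; apply in_ipc; constructor.
  - rewrite IHp1, IHp2. split.
    + intros [H|H]; eapply in_mp; eauto; apply in_ipc; constructor.
    + apply wprime.
  - split.
    + intro H. apply NNPP. intro Hn.
      assert (nd : ~ Der (add (wset w) p1) p2).
      { intro D. apply Hn, wclosed, deduction, D. }
      destruct (lindenbaum _ _ nd) as [v [Hv1 Hv2]].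
      assert (Rv : bigcapN world Nw w v) by (apply bigcap_eq; intros x Hx; apply Hv1; left; auto).
      destruct (H v Rv) as [H1|H1].
      * apply H1, IHp1, Hv1. right; auto.
      * apply Hv2, IHp2, H1.
    + intros H v Hv. apply bigcap_eq in Hv.
      destruct (classic (wset v p1)) as [H1|H1].
      * right. apply IHp2. eapply in_mp; eauto.
      * left. rewrite IHp1. auto.
  - split.
    + intro H. apply NNPP. intro Hn.
      assert (nd : ~ Der (fun r => wset w (Delta r)) p).
      { intro D. apply Hn. clear -D. induction D.
        - apply in_thm. now apply T_rn.
        - exact H.
        - eapply in_mp; [|exact IHD2]. eapply in_mp; [|exact IHD1].
          apply in_thm. constructor. apply Ax_K. }
      destruct (lindenbaum _ _ nd) as [v [Hv1 Hv2]].
      apply Hv2, IHp, H, bigcup_eq. exact Hv1.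
    + intros H v Hv. apply bigcup_eq in Hv. apply IHp. auto.
Qed.

Theorem mainTheorem3 (Gamma : formula -> Prop) (phi : formula) :
  IML1_theory Gamma -> ~ Gamma phi ->
  exists (W : Type) (N : W -> (W -> Prop) -> Prop) (V : nat -> W -> Prop) (v : W),
    nIML1_model W N V /\
    (forall psi, Gamma psi -> forces W N V v psi) /\
    ~ forces W N V v phi.
Proof.
  intros [Hax [Hmp Hrn]] Hphi.
  assert (Hthm : forall p, Thm p -> Gamma p) by (induction 1; eauto).
  assert (nd : ~ Der Gamma phi).
  { intro D. apply Hphi. clear Hphi. induction D; eauto. }
  destruct (lindenbaum _ _ nd) as [v [Hv1 Hv2]].
  exists world, Nw, Vw, v. split; [|split].
  - split; [refine (conj (inhabits v) (conj _ (conj _ (conj _ (conj _ _)))))|].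
    + intro w. apply bigcap_eq. intros x Hx; exact Hx.
    + intro w. split.
      * intros x Hx. apply bigcap_eq. exact Hx.
      * intros x Hx. apply R_U, bigcap_eq, Hx.
    + intros w u Hu x Hx. apply bigcap_eq. apply bigcap_eq in Hu. apply bigcap_eq in Hx.
      intros y Hy. auto.
    + intros w X H1 H2. split.
      * intros x Hx. apply H1, bigcap_eq, Hx.
      * intros x Hx. apply bigcup_eq, H2, Hx.
    + intros w u Hu x Hx. apply bigcup_eq. apply bigcap_eq in Hu. apply bigcup_eq in Hx.
      intros y Hy. apply Hx, Hu, Hy.
    + intros n w Hw x Hx. apply bigcap_eq in Hx. apply Hx, Hw.
  - intros psi Hpsi. apply truth. auto.
  - rewrite truth. exact Hv2.
Qed.
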